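(* Let $n$ be a positive integer and $\alpha\in[0,1]$, and let $G$ be a split graph that arises from the disjoint union of a clique $C$ of order $\alpha n$ and an independent set $I$ of order $(1-\alpha)n$ by adding $m$ edges between vertices in $C$ and vertices in $I$. Then $$Mo(G) \leq ((1+\alpha)n-1)m-\frac{2m^2}{(1-\alpha)n} \leq \begin{cases} \alpha(1-\alpha)n^2\big((1-\alpha)n-1\big) & \text{if } \alpha\leq \frac{1}{3}-\frac{1}{3n},\\[2mm] \frac{1}{8}(1-\alpha)n\big((1+\alpha)n-1\big)^2 & \text{if } \alpha>\frac{1}{3}-\frac{1}{3n}, \end{cases}$$ and moreover $Mo(G)\leq \frac{4}{27}n^3$.
   Context: All graphs are finite and simple. For a graph $G$ and an edge $uv$ of $G$, $n_G(u,v)$ denotes the number of vertices of $G$ whose distance in $G$ to $u$ is strictly smaller than their distance in $G$ to $v$. The Mostar index of $G$ is $Mo(G)=\sum_{uv\in E(G)}|n_G(u,v)-n_G(v,u)|$. Here $\alpha n$ and $(1-\alpha)n$ are the (integer) orders of $C$ and $I$. *)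

(* Defs.v *)
From HB Require Import structures.
From mathcomp Require Import all_boot all_order all_algebra.
Set Implicit Arguments. Unset Strict Implicit. Unset Printing Implicit Defensive.
Import Order.TTheory GRing.Theory Num.Theory.

(* A finite simple graph: vertex type V (finType), adjacency e : rel V,
   assumed symmetric and irreflexive in the theorem. *)
Section Graph.
Variables (V : finType) (e : rel V).

Fixpoint ball (k : nat) (u : V) : {set V} :=
  match k with
  | 0 => [set u]
  | k'.+1 => ball k' u :|: [set w | [exists x in ball k' u, e x w]]
  end.

(* graph distance; None = infinity (different components).
   Any finite distance is < #|V|. *)
Definition dist (u w : V) : option nat :=
  if [exists k : 'I_#|V|, w \in ball k u]
  then Some (find (fun k => w \in ball k u) (iota 0 #|V|))
  else None.

Definition dlt (a b : option nat) : bool :=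
  match a, b with
  | Some x, Some y => x < y
  | Some _, None => true
  | None, _ => false
  end.

Definition nG (u v : V) : nat := #|[set w | dlt (dist w u) (dist w v)]|.

(* Mostar index: sum over edges uv (each unordered edge once) *)
Definition mostar : nat :=
  \sum_(u : V) \sum_(v : V | (enum_rank u < enum_rank v) && e u v)
     (maxn (nG u v) (nG v u) - minn (nG u v) (nG v u)).

Definition cross_edges (C : {set V}) : nat :=
  #|[set p : V * V | [&& p.1 \in C, p.2 \notin C & e p.1 p.2]]|.

End Graph.

(* Main.v *)
Require Import Defs.
From HB Require Import structures.
From mathcomp Require Import all_boot all_order all_algebra.
From mathcomp Require Import zify ring lra.
Import Order.TTheory GRing.Theory Num.Theory.
Set Implicit Arguments. Unset Strict Implicit. Unset Printing Implicit Defensive.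


Section Dist.
Variables (V : finType) (e : rel V).
Hypotheses (esym : symmetric e) (eirr : irreflexive e).

Lemma in_ball0 u w : (w \in ball e 0 u) = (w == u).
Proof. by rewrite /= inE. Qed.

Lemma in_ball1 u w : (w \in ball e 1 u) = (w == u) || e u w.
Proof.
rewrite /= !inE; congr (_ || _); apply/existsP/idP => [[x /andP[]]|H].
  by rewrite inE => /eqP ->.
by exists u; rewrite inE eqxx.
Qed.

Lemma ball_sub k u : ball e k u \subset ball e k.+1 u.
Proof. by rewrite /= subsetUl. Qed.

Lemma in_ball2 u c w : e u c -> e c w -> w \in ball e 2 u.
Proof.
move=> h1 h2; rewrite [ball e 2 u]/= !inE; apply/orP; right.
apply/existsP; exists c; rewrite h2 andbT in_ball1 h1; exact: orbT.
Qed.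

Lemma ball_iso k u : (forall y, ~~ e u y) -> ball e k u = [set u].
Proof.
move=> hu; elim: k => [//|k IH]; rewrite [ball e k.+1 u]/= IH.
apply/setP => w; rewrite in_setU !in_set1 in_set; case: (w == u) => //=.
apply/existsP => -[x /andP[]]; rewrite in_set1 => /eqP ->; by rewrite (negbTE (hu w)).
Qed.

Lemma dist_Some w u j : j < #|V| -> u \in ball e j w ->
  (forall i, i < j -> u \notin ball e i w) -> dist e w u = Some j.
Proof.
move=> hj hin hlt; rewrite /dist.
have -> : [exists k : 'I_#|V|, u \in ball e k w] by apply/existsP; exists (Ordinal hj).
congr Some.
set p := (fun k => u \in ball e k w).
have hs : has p (iota 0 #|V|) by apply/hasP; exists j; rewrite ?mem_iota.
have hf := hs; rewrite has_find size_iota in hf.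
have hn := nth_find 0 hs; rewrite nth_iota // add0n in hn.
case: (ltngtP (find p (iota 0 #|V|)) j) => // H.
  by case/negP: (hlt _ H); exact: hn.
have := before_find 0 H; rewrite nth_iota // add0n.
by rewrite /p hin.
Qed.

Lemma dist_None w u : (forall k, u \notin ball e k w) -> dist e w u = None.
Proof.
move=> H; rewrite /dist; case: existsP => // [[k]]; by rewrite (negbTE (H k)).
Qed.

Lemma dist0 w : dist e w w = Some 0.
Proof.
apply: dist_Some => //; last by rewrite in_ball0.
by apply/card_gt0P; exists w.
Qed.

Lemma card2 (a b : V) : a != b -> 1 < #|V|.
Proof.
move=> ab; have : #|[set a; b]| <= #|V| by apply: max_card.
by rewrite cards2 ab.
Qed.

Lemma dist1 w u : e w u -> dist e w u = Some 1.
Proof.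
move=> h; have wu : w != u by apply: contraTneq h => ->; rewrite eirr.
apply: dist_Some; first exact: card2 wu.
  by rewrite in_ball1 h orbT.
by case=> // _; rewrite in_ball0 eq_sym.
Qed.

Lemma dist2 w c u : ~~ e w u -> w != u -> e w c -> e c u -> dist e w u = Some 2.
Proof.
move=> nh wu h1 h2.
have wc : w != c by apply: contraTneq h1 => ->; rewrite eirr.
have cu : c != u by apply: contraTneq h2 => ->; rewrite eirr.
apply: dist_Some.
- have : #|w |: [set c; u]| <= #|V| by apply: max_card.
  by rewrite cardsU1 cards2 cu !inE negb_or wc wu.
- exact: in_ball2 h1 h2.
- case=> [_|[_|//]]; first by rewrite in_ball0 eq_sym.
  by rewrite in_ball1 negb_or eq_sym wu nh.
Qed.

Lemma distIso w u : (forall y, ~~ e w y) -> w != u -> dist e w u = None.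
Proof.
move=> hw wu; apply: dist_None => k; rewrite ball_iso // inE eq_sym //.
Qed.

End Dist.


Section Split.
Variables (V : finType) (e : rel V) (C : {set V}).
Hypotheses (esym : symmetric e) (eirr : irreflexive e).
Hypothesis hC : {in C &, forall u v, u != v -> e u v}.
Hypothesis hI : {in ~: C &, forall u v, ~~ e u v}.

Definition dI u := [set w | (w \notin C) && e u w].
Definition dC x := [set w | (w \in C) && e w x].

Lemma dlt_asym a b : dlt a b -> dlt b a = false.
Proof. by case: a b => [a|] [b|] //= H; apply/negbTE; rewrite -leqNgt ltnW. Qed.

Lemma nG_CC u v : u \in C -> v \in C -> u != v ->
  nG e u v = (#|dI u :\: dI v|).+1.
Proof.
move=> hu hv uv; have euv : e u v := hC hu hv uv.
have evu : e v u by rewrite esym.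
rewrite /nG.
suff -> : [set w | dlt (dist e w u) (dist e w v)] = u |: (dI u :\: dI v).
  by rewrite cardsU1 !inE hu.
apply/setP => w; rewrite !inE.
case: (eqVneq w u) => [->|wu] /=.
  by rewrite (dist0 e) (dist1 eirr euv).
case: (eqVneq w v) => [->|wv] /=.
  by rewrite (dist0 e) (dist1 eirr evu) hv.
case wC: (w \in C) => /=.
  by rewrite (dist1 eirr (hC wC hu wu)) (dist1 eirr (hC wC hv wv)).
have wI : w \in ~: C by rewrite inE wC.
case ewu: (e u w); case evw: (e v w) => /=.
- have h1 : e w u by rewrite esym.
  have h2 : e w v by rewrite esym.
  by rewrite (dist1 eirr h1) (dist1 eirr h2).
- have h1 : e w u by rewrite esym.
  have h2 : ~~ e w v by rewrite esym evw.
  by rewrite (dist1 eirr h1) (dist2 eirr h2 wv h1 euv).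
- have h1 : e w v by rewrite esym.
  have h2 : ~~ e w u by rewrite esym ewu.
  by rewrite (dist1 eirr h1) (dist2 eirr h2 wu h1 evu).
- case: (pickP (fun c => e w c)) => [c ewc | none].
    have cC : c \in C.
      apply/negPn/negP => cI.
      have cI' : c \in ~: C by rewrite inE.
      by move: (hI wI cI'); rewrite ewc.
    have cu : c != u by apply: contraTneq ewc => ->; rewrite esym ewu.
    have cv : c != v by apply: contraTneq ewc => ->; rewrite esym evw.
    rewrite (@dist2 _ _ eirr w c u) ?(@dist2 _ _ eirr w c v) //.
    + by rewrite esym evw.
    + exact: hC.
    + by rewrite esym ewu.
    + exact: hC.
  rewrite (@distIso _ _ w u) ?(@distIso _ _ w v) // => y; by rewrite none.
Qed.

Lemma nG_cross u x : u \in C -> x \notin C -> e u x ->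
  [/\ 0 < nG e u x, 0 < nG e x u & nG e u x + nG e x u + #|dC x| <= #|V|.+1].
Proof.
move=> hu hx eux; have exu : e x u by rewrite esym.
set Su := [set w | dlt (dist e w u) (dist e w x)].
set Sx := [set w | dlt (dist e w x) (dist e w u)].
set D := dC x :\ u.
have hD : #|dC x| = #|D|.+1 by rewrite (cardsD1 u) !inE hu eux.
have uSu : u \in Su by rewrite inE (dist0 e) (dist1 eirr eux).
have xSx : x \in Sx by rewrite inE (dist0 e) (dist1 eirr exu).
split; [by apply/card_gt0P; exists u | by apply/card_gt0P; exists x|].
have I1 : Su :&: Sx = set0.
  apply/setP => w; rewrite !inE; apply/negbTE; apply/negP => /andP[h1 h2].
  by rewrite (dlt_asym h1) in h2.
have I2 : (Su :|: Sx) :&: D = set0.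
  apply/setP => w; rewrite !inE; apply/negbTE; apply/negP.
  case/andP=> + /andP[wu /andP[wC ewx]].
  rewrite (dist1 eirr ewx) (dist1 eirr (hC wC hu wu)) /=.
  by rewrite ltnn.
have := cardsUI Su Sx; rewrite I1 cards0 addn0 => <-.
have := cardsUI (Su :|: Sx) D; rewrite I2 cards0 addn0 hD => H.
have : #|Su :|: Sx :|: D| <= #|V| by apply: max_card.
lia.
Qed.

End Split.

Local Open Scope ring_scope.

Lemma card_sumR (T : finType) (A : {set T}) :
  (#|A|%:R : rat) = \sum_x ((x \in A) : nat)%:R.
Proof.
rewrite -sum1_card natr_sum [RHS](bigID (mem A)) /=.
rewrite [X in _ = _ + X]big1 ?addr0; last by move=> i /negbTE ->.
by apply: eq_bigr => i ->.
Qed.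

Lemma card_sumP (T : finType) (P : pred T) :
  (#|[set x | P x]|%:R : rat) = \sum_x ((P x) : nat)%:R.
Proof. by rewrite card_sumR; apply: eq_bigr => x _; rewrite inE. Qed.

Lemma sum_prod (T : finType) (X Y : T -> rat) :
  \sum_u \sum_v X u * Y v = (\sum_u X u) * (\sum_v Y v).
Proof. rewrite mulr_suml; apply: eq_bigr => u _; by rewrite mulr_sumr. Qed.

Lemma sum3 (T : finType) (X1 Y1 X2 Y2 X3 Y3 : T -> rat) c :
  \sum_u \sum_v (X1 u * Y1 v + X2 u * Y2 v + c * (X3 u * Y3 v)) =
  (\sum_u X1 u) * (\sum_v Y1 v) + (\sum_u X2 u) * (\sum_v Y2 v)
    + c * ((\sum_u X3 u) * (\sum_v Y3 v)).
Proof.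
rewrite -!sum_prod mulr_sumr -!big_split /=; apply: eq_bigr => u _.
by rewrite mulr_sumr -!big_split.
Qed.

Lemma absdiff_le (a b t : rat) : 0 <= a <= t -> 0 <= b <= t ->
  `|a - b| <= a + b - 2 * (a * b / t).
Proof.
move=> /andP[a0 at_] /andP[b0 bt].
have [t0|tn0] := eqVneq t 0.
  have -> : a = 0 by apply/le_anti; rewrite a0 -t0 at_.
  have -> : b = 0 by apply/le_anti; rewrite b0 -t0 bt.
  by rewrite !(mul0r, subrr, normr0, addr0, mulr0).
have tp : 0 < t by rewrite lt_def tn0 (le_trans a0 at_).
set q := a * b / t.
have hq : q * t = a * b by rewrite /q divfK.
have hqa : q <= a.
  rewrite -(ler_pM2r tp) hq; exact: ler_wpM2l.
have hqb : q <= b.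
  rewrite -(ler_pM2r tp) hq mulrC; exact: ler_wpM2l.
case: (lerP a b) => hab.
  lra.
lra.
Qed.

Lemma maxmin_nat (a b : nat) :
  ((maxn a b - minn a b)%N%:R : rat) = `|a%:R - b%:R|.
Proof.
case: (leqP a b) => h.
  by rewrite natrB // distrC ger0_norm // subr_ge0 ler_nat.
have h' := ltnW h.
by rewrite natrB // ger0_norm // subr_ge0 ler_nat.
Qed.

Lemma symhalf (T : finType) (G : T -> T -> rat) :
  (forall u v, G u v = G v u) -> (forall u, G u u = 0) ->
  \sum_u \sum_v G u v = 2 * \sum_u \sum_(v | (enum_rank u < enum_rank v)%N) G u v.
Proof.
move=> Gs G0.
pose G1 u v := if (enum_rank u < enum_rank v)%N then G u v else 0.
pose G2 u v := if (enum_rank v < enum_rank u)%N then G u v else 0.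
have E : forall u v, G u v = G1 u v + G2 u v.
  move=> u v; rewrite /G1 /G2.
  case: (ltngtP (enum_rank u) (enum_rank v)) => h; rewrite ?addr0 ?add0r //.
  have -> : u = v by apply: enum_rank_inj; apply: val_inj.
  by rewrite G0.
have -> : \sum_u \sum_v G u v = \sum_u \sum_v G1 u v + \sum_u \sum_v G2 u v.
  rewrite -big_split; apply: eq_bigr => u _; rewrite -big_split.
  by apply: eq_bigr => v _.
have -> : \sum_u \sum_v G2 u v = \sum_u \sum_v G1 u v.
  rewrite exchange_big; apply: eq_bigr => u _; apply: eq_bigr => v _.
  by rewrite /G1 /G2 Gs.
rewrite mulr_natl mulr2n; congr (_ + _); apply: eq_bigr => u _.
all: by rewrite [RHS]big_mkcond.
Qed.

Local Open Scope ring_scope.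

Section Main.
Variables (V : finType) (e : rel V) (C : {set V}).
Hypotheses (esym : symmetric e) (eirr : irreflexive e).
Hypothesis hC : {in C &, forall u v, u != v -> e u v}.
Hypothesis hI : {in ~: C &, forall u v, ~~ e u v}.

Definition a u x : rat := (((u \in C) && (x \notin C) && e u x) : nat)%:R.
Definition du u := \sum_x a u x.
Definition dg x := \sum_u a u x.
Definition iC u : rat := ((u \in C) : nat)%:R.
Definition iI u : rat := ((u \notin C) : nat)%:R.
Definition kR : rat := #|C|%:R.
Definition tR : rat := #|~: C|%:R.
Definition NR : rat := #|V|%:R.
Definition M := \sum_u du u.

Lemma kR_sum : kR = \sum_u iC u.
Proof. by rewrite /kR card_sumR. Qed.
Lemma tR_sum : tR = \sum_u iI u.
Proof. by rewrite /tR card_sumR; apply: eq_bigr => u _; rewrite inE. Qed.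
Lemma NR_sum : NR = kR + tR.
Proof. by rewrite /NR /kR /tR -natrD cardsC. Qed.

Lemma a_ge0 u x : 0 <= a u x. Proof. by rewrite /a ler0n. Qed.

Lemma du_ge0 u : 0 <= du u. Proof. by apply: sumr_ge0 => x _; apply: a_ge0. Qed.
Lemma dg_ge0 u : 0 <= dg u. Proof. by apply: sumr_ge0 => x _; apply: a_ge0. Qed.

Lemma du_le u : du u <= tR.
Proof.
rewrite tR_sum; apply: ler_sum => x _; rewrite /a /iI.
by case: (u \in C); case: (x \in C); case: (e u x).
Qed.

Lemma dg_le u : dg u <= kR.
Proof.
rewrite kR_sum; apply: ler_sum => x _; rewrite /a /iC.
by case: (u \in C); case: (x \in C); case: (e x u).
Qed.

Lemma du_out u : u \notin C -> du u = 0.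
Proof. by move=> /negbTE h; apply: big1 => x _; rewrite /a h. Qed.
Lemma dg_out u : u \in C -> dg u = 0.
Proof. by move=> h; apply: big1 => x _; rewrite /a h /= andbF. Qed.

Lemma iC_du u : iC u * du u = du u.
Proof. rewrite /iC; case h: (u \in C); first by rewrite mul1r. by rewrite mul0r du_out ?h. Qed.
Lemma iI_dg u : iI u * dg u = dg u.
Proof. rewrite /iI; case h: (u \in C); last by rewrite mul1r. by rewrite mul0r dg_out ?h. Qed.

Lemma M_dg : M = \sum_x dg x.
Proof. by rewrite /M /du /dg exchange_big. Qed.

Lemma cross_M : (cross_edges e C)%:R = M.
Proof.
rewrite /cross_edges card_sumP /M /du (pair_bigA _ (fun u x => a u x)) /=.
by apply: eq_bigr => p _; rewrite /a andbA.
Qed.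

Lemma du_card u : u \in C -> #|dI e C u|%:R = du u.
Proof. move=> h; rewrite card_sumP; apply: eq_bigr => x _; by rewrite /a h. Qed.
Lemma dg_card x : x \notin C -> #|dC e C x|%:R = dg x.
Proof.
move=> h; rewrite card_sumP; apply: eq_bigr => u _; rewrite /a h andbT //.
Qed.

Definition f u v := (maxn (nG e u v) (nG e v u) - minn (nG e u v) (nG e v u))%N.

Lemma f_sym u v : f u v = f v u.
Proof. by rewrite /f maxnC minnC. Qed.

Definition Bnd u v := iC u * iC v * (du u + du v - 2 * (du u * du v / tR))
  + a u v * (NR - 1 - dg v) + a v u * (NR - 1 - dg u).

Lemma Bnd_sym u v : Bnd u v = Bnd v u.
Proof.
rewrite /Bnd; ring.
Qed.

Lemma first_ge0 u v : `|du u - du v| <= du u + du v - 2 * (du u * du v / tR).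
Proof. by apply: absdiff_le; rewrite du_ge0 du_le. Qed.

Lemma a_nonedge u v : ~~ e u v -> a u v = 0 /\ a v u = 0.
Proof. by move=> /negbTE h; rewrite /a h esym h !andbF. Qed.

Lemma Bnd_nonedge u v : ~~ e u v -> 0 <= Bnd u v.
Proof.
move=> h; rewrite /Bnd; have [-> ->] := a_nonedge h; rewrite !mul0r !addr0.
apply: mulr_ge0; first by apply: mulr_ge0; rewrite /iC ler0n.
exact: le_trans (normr_ge0 _) (first_ge0 u v).
Qed.

Lemma f_cross u x : u \in C -> x \notin C -> e u x -> (f u x)%:R <= NR - 1 - dg x.
Proof.
move=> hu hx eux.
have [h1 h2 h3] := nG_cross esym eirr hC hu hx eux.
have H : (f u x + #|dC e C x| + 1 <= #|V|)%N by rewrite /f; lia.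
have : ((f u x + #|dC e C x| + 1)%N%:R <= NR :> rat) by rewrite /NR ler_nat.
rewrite !natrD dg_card //; lra.
Qed.

Lemma f_Bnd u v : e u v -> (f u v)%:R <= Bnd u v.
Proof.
move=> euv; rewrite /Bnd /iC /a.
case hu: (u \in C); case hv: (v \in C) => /=.
- have uv : u != v by apply: contraTneq euv => ->; rewrite eirr.
  rewrite /f (nG_CC esym eirr hC hI hu hv uv) (nG_CC esym eirr hC hI hv hu).
  2: by rewrite eq_sym.
  rewrite !mul1r !mul0r !addr0.
  apply: le_trans (first_ge0 u v).
  rewrite -(du_card hu) -(du_card hv) -maxmin_nat.
  rewrite ler_nat !cardsD.
  have : (#|dI e C u :&: dI e C v| <= #|dI e C u|)%N by apply/subset_leq_card/subsetIl.
  have : (#|dI e C v :&: dI e C u| <= #|dI e C v|)%N by apply/subset_leq_card/subsetIl.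
  rewrite setIC; lia.
- rewrite euv /= !(mul1r, mul0r, mulr0, add0r, addr0).
  by apply: f_cross; rewrite ?hu ?hv.
- have evu : e v u by rewrite esym.
  rewrite evu /= !(mul1r, mul0r, mulr0, add0r, addr0) f_sym.
  by apply: f_cross; rewrite ?hu ?hv // esym.
- by have := hI (_ : u \in ~: C) (_ : v \in ~: C); rewrite !inE hu hv euv => /(_ isT isT).
Qed.


Lemma Mo_le : 2 * (mostar e)%:R <= \sum_u \sum_v Bnd u v.
Proof.
pose G u v := if e u v then Bnd u v else 0.
have step1 : (mostar e)%:R <= \sum_u \sum_(v | (enum_rank u < enum_rank v)%N) G u v.
  rewrite /mostar natr_sum; apply: ler_sum => u _; rewrite natr_sum.
  rewrite [X in X <= _]big_mkcond [X in _ <= X]big_mkcond; apply: ler_sum => v _.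
  case: (enum_rank u < enum_rank v)%N => //=.
  rewrite /G; case h: (e u v) => //=; exact: f_Bnd.
have step2 : \sum_u \sum_v G u v = 2 * \sum_u \sum_(v | (enum_rank u < enum_rank v)%N) G u v.
  apply: symhalf => [u v|u]; rewrite /G; last by rewrite eirr.
  by rewrite esym Bnd_sym.
have step3 : \sum_u \sum_v G u v <= \sum_u \sum_v Bnd u v.
  apply: ler_sum => u _; apply: ler_sum => v _; rewrite /G.
  case h: (e u v) => //; apply: Bnd_nonedge; by rewrite h.
lra.
Qed.

Definition Q := \sum_x dg x ^+ 2.

Lemma sum_dgc : \sum_x dg x * (NR - 1 - dg x) = (NR - 1) * M - Q.
Proof.
rewrite M_dg /Q mulr_sumr -sumrB; apply: eq_bigr => x _; ring.
Qed.

Lemma sumBnd : \sum_u \sum_v Bnd u v =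
  2 * kR * M - 2 * (M * M / tR) + 2 * ((NR - 1) * M - Q).
Proof.
have E : forall u v, Bnd u v = (du u * iC v + iC u * du v + (- 2 / tR) * (du u * du v))
   + a u v * (NR - 1 - dg v) + a v u * (NR - 1 - dg u).
  move=> u v; rewrite /Bnd; congr (_ + _ + _).
  rewrite /iC; case hu: (u \in C); last rewrite (du_out (negbT hu));
  case hv: (v \in C); rewrite ?(du_out (negbT hv)) /=; ring.
under eq_bigr do under eq_bigr do rewrite E.
rewrite -[LHS]/(\sum_u \sum_v _).
have -> : \sum_u \sum_v (du u * iC v + iC u * du v + - 2 / tR * (du u * du v)
   + a u v * (NR - 1 - dg v) + a v u * (NR - 1 - dg u)) =
  \sum_u \sum_v (du u * iC v + iC u * du v + - 2 / tR * (du u * du v))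
   + \sum_u \sum_v (a u v * (NR - 1 - dg v)) + \sum_u \sum_v (a v u * (NR - 1 - dg u)).
  rewrite -!big_split; apply: eq_bigr => u _; rewrite -!big_split //.
rewrite sum3 -/M -kR_sum.
rewrite exchange_big /=.
have -> : \sum_v \sum_u a u v * (NR - 1 - dg v) = \sum_x dg x * (NR - 1 - dg x).
  by apply: eq_bigr => v _; rewrite -mulr_suml.
rewrite sum_dgc; ring.
Qed.


Lemma Q_ge0 : 0 <= Q.
Proof. by apply: sumr_ge0 => x _; rewrite sqr_ge0. Qed.

Lemma CS : M * M <= tR * Q.
Proof.
have H : 0 <= \sum_u \sum_v (dg u ^+ 2 * iI v + iI u * dg v ^+ 2 + (-2) * (dg u * dg v)).
  apply: sumr_ge0 => u _; apply: sumr_ge0 => v _.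
  have -> : dg u ^+ 2 * iI v + iI u * dg v ^+ 2 + (-2) * (dg u * dg v)
      = iI u * iI v * (dg u - dg v) ^+ 2.
    rewrite /iI; case hu: (u \in C); case hv: (v \in C);
    (try rewrite (dg_out hu)); (try rewrite (dg_out hv)); rewrite /=; ring.
  by apply: mulr_ge0; [apply: mulr_ge0; rewrite /iI ler0n | apply: sqr_ge0].
rewrite sum3 -tR_sum -M_dg -/Q in H; lra.
Qed.

Lemma M_le : M <= kR * tR.
Proof.
rewrite /M kR_sum mulr_suml; apply: ler_sum => u _.
rewrite -iC_du; apply: ler_wpM2l; first by rewrite /iC ler0n.
exact: du_le.
Qed.

Lemma M_ge0 : 0 <= M.
Proof. by apply: sumr_ge0 => u _; apply: du_ge0. Qed.

Lemma tR_ge0 : 0 <= tR. Proof. by rewrite /tR ler0n. Qed.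
Lemma kR_ge0 : 0 <= kR. Proof. by rewrite /kR ler0n. Qed.

Lemma D_le : M * M / tR <= Q.
Proof.
have [t0|tn0] := eqVneq tR 0.
  by rewrite t0 invr0 mulr0 Q_ge0.
have tp : 0 < tR by rewrite lt_def tn0 tR_ge0.
by rewrite ler_pdivrMr // [_ * tR]mulrC CS.
Qed.

Lemma Mo_B : (mostar e)%:R <= (NR + kR - 1) * M - 2 * (M * M / tR).
Proof.
have := Mo_le; rewrite sumBnd => H.
have := D_le; lra.
Qed.

Lemma P3 : (NR + kR - 1) * M - 2 * (M * M / tR) <= 1/8 * tR * (NR + kR - 1) ^+ 2.
Proof.
have [t0|tn0] := eqVneq tR 0.
  have M0 : M = 0 by apply/le_anti; rewrite M_ge0 andbT; have := M_le; rewrite t0 mulr0.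
  by rewrite t0 M0 !(mulr0, mul0r, subrr).
have tp : 0 < tR by rewrite lt_def tn0 tR_ge0.
set q := M / tR.
have hM : M = q * tR by rewrite /q divfK.
have hD : M * M / tR = q * q * tR by rewrite hM; field.
rewrite hD hM.
have h := mulr_ge0 (ltW tp) (sqr_ge0 (NR + kR - 1 - 4 * q)).
nra.
Qed.

Lemma final (alpha : rat) :
  (0 < #|V|)%N ->
  0 <= alpha <= 1 ->
  (#|C|%:R : rat) = alpha * #|V|%:R ->
  let n : rat := #|V|%:R in
  let m : rat := (cross_edges e C)%:R in
  let Mo : rat := (mostar e)%:R in
  let B : rat := ((1 + alpha) * n - 1) * m - 2 * m ^+ 2 / ((1 - alpha) * n) in
  [/\ Mo <= B,
      alpha <= 1/3 - 1/(3 * n) ->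
        B <= alpha * (1 - alpha) * n ^+ 2 * ((1 - alpha) * n - 1),
      1/3 - 1/(3 * n) < alpha ->
        B <= 1/8 * (1 - alpha) * n * ((1 + alpha) * n - 1) ^+ 2
    & Mo <= 4/27 * n ^+ 3].
Proof.
move=> hn ha hk n m Mo B.
change (#|C|%:R : rat) with kR in hk.
have hN : NR = kR + tR := NR_sum.
have N1 : 1 <= NR by rewrite /NR ler1n.
have ht : (1 - alpha) * NR = tR by rewrite mulrBl mul1r -hk hN; ring.
have hA : (1 + alpha) * NR - 1 = NR + kR - 1 by rewrite mulrDl mul1r -hk.
have hB : B = (NR + kR - 1) * M - 2 * (M * M / tR).
  by rewrite /B /m /n cross_M -/NR hA ht expr2 !mulrA.
have hMo := Mo_B.
have hP3 := P3.
have hMle := M_le. have hM0 := M_ge0. have ht0 := tR_ge0. have hk0 := kR_ge0.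
split.
- by rewrite hB.
- move=> h.
  have e1 : alpha * (1 - alpha) * n ^+ 2 * ((1 - alpha) * n - 1) = kR * tR * (tR - 1).
    by rewrite /n -/NR -ht hk; ring.
  rewrite e1 hB.
  have h3 : 3 * kR <= NR - 1.
    have := ler_wpM2r (ltW (lt_le_trans ltr01 N1)) h.
    have -> : (1/3 - 1/(3 * n)) * NR = (NR - 1) / 3.
      rewrite /n -/NR; field; by rewrite pnatr_eq0 -lt0n.
    rewrite -hk; lra.
  have tp : 0 < tR by lra.
  set q := M / tR.
  have hM : M = q * tR by rewrite /q divfK // gt_eqF.
  have hD : M * M / tR = q * q * tR by rewrite hM; field; rewrite gt_eqF.
  have hq : q <= kR by rewrite -(ler_pM2r tp) -hM.
  have hq0 : 0 <= q by rewrite /q divr_ge0.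
  rewrite hD hM.
  have hq1 : 0 <= kR - q by lra.
  have hq2 : 0 <= tR - 1 - 2 * q by lra.
  have := mulr_ge0 (mulr_ge0 hq1 hq2) ht0.
  rewrite hN; nra.
- move=> _.
  have -> : 1/8 * (1 - alpha) * n * ((1 + alpha) * n - 1) ^+ 2
      = 1/8 * tR * (NR + kR - 1) ^+ 2.
    by rewrite /n -/NR -ht -hA; ring.
  by rewrite hB.
- rewrite /Mo /n -/NR.
  apply: (le_trans hMo); apply: (le_trans hP3).
  have ha1 : 0 <= NR + kR - 1 by lra.
  have ha2 : (NR + kR - 1) ^+ 2 <= (2 * NR - tR) ^+ 2.
    rewrite ler_sqr ?nnegrE //; lra.
  have h5 := ler_wpM2l ht0 ha2.
  have h7 : 0 <= 8 * NR - 3 * tR by lra.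
  have := mulr_ge0 (sqr_ge0 (3 * tR - 2 * NR)) h7.
  nra.
Qed.

End Main.


Unset Implicit Arguments.

Theorem theorem2 (V : finType) (e : rel V) (C : {set V}) (alpha : rat) :
  symmetric e -> irreflexive e ->
  (0 < #|V|)%N ->
  0 <= alpha <= 1 ->
  (#|C|%:R : rat) = alpha * #|V|%:R ->
  (* C is a clique, I := ~: C is an independent set *)
  {in C &, forall u v, u != v -> e u v} ->
  {in ~: C &, forall u v, ~~ e u v} ->
  let n : rat := #|V|%:R in
  let m : rat := (cross_edges e C)%:R in
  let Mo : rat := (mostar e)%:R in
  let B : rat := ((1 + alpha) * n - 1) * m - 2 * m ^+ 2 / ((1 - alpha) * n) in
  [/\ Mo <= B,
      alpha <= 1/3 - 1/(3 * n) ->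
        B <= alpha * (1 - alpha) * n ^+ 2 * ((1 - alpha) * n - 1),
      1/3 - 1/(3 * n) < alpha ->
        B <= 1/8 * (1 - alpha) * n * ((1 + alpha) * n - 1) ^+ 2
    & Mo <= 4/27 * n ^+ 3].
Proof.
move=> esym eirr hn ha hk hC hI.
exact: (final esym eirr hC hI hn ha hk).
Qed.
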